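(* Let $(A,*,\odot)$ be a $\mathrm{BiCom}$-algebra and let $d$ be a linear map on $A$ which is a derivation with respect to both $*$ and $\odot$. Define $x\star y=d(x)\odot y$. Then $(A,*,\star)$ is a $\mathrm{GD}^!$-algebra.
   Context: A $\mathrm{BiCom}$-algebra is a vector space with two bilinear operations $*$ and $\odot$, each associative and commutative, satisfying $(x\odot y)*z=x\odot(y*z)$. A $\mathrm{GD}^!$-algebra is a vector space with two bilinear operations $*$ and $\star$ such that $*$ is associative and commutative, and $(x\star y)\star z-x\star(y\star z)=(x\star z)\star y-x\star(z\star y)$, $x\star(y\star z)=y\star(x\star z)$, $x\star(y*z)=(x\star y)*z$, $x\star(y*z)+y\star(x*z)=(x*y)\star z$. *)

(* Defs.v *)
From HB Require Import structures.
From mathcomp Require Import all_boot all_order all_algebra.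
Set Implicit Arguments. Unset Strict Implicit. Unset Printing Implicit Defensive.
Import GRing.Theory.
Local Open Scope ring_scope.

Definition bilinear_op (K : fieldType) (V : lmodType K) (m : V -> V -> V) : Prop :=
  (forall a x y z, m (a *: x + y) z = a *: m x z + m y z) /\
  (forall a x y z, m x (a *: y + z) = a *: m x y + m x z).

Definition linear_map (K : fieldType) (V : lmodType K) (d : V -> V) : Prop :=
  forall a x y, d (a *: x + y) = a *: d x + d y.

Definition assoc_op (V : Type) (m : V -> V -> V) : Prop :=
  forall x y z, m (m x y) z = m x (m y z).

Definition comm_op (V : Type) (m : V -> V -> V) : Prop :=
  forall x y, m x y = m y x.

Definition BiCom_algebra (K : fieldType) (V : lmodType K)
    (mul odot : V -> V -> V) : Prop :=
  bilinear_op mul /\ bilinear_op odot /\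
  assoc_op mul /\ comm_op mul /\
  assoc_op odot /\ comm_op odot /\
  (forall x y z, mul (odot x y) z = odot x (mul y z)).

Definition GDdual_algebra (K : fieldType) (V : lmodType K)
    (mul star : V -> V -> V) : Prop :=
  bilinear_op mul /\ bilinear_op star /\
  assoc_op mul /\ comm_op mul /\
  (forall x y z, star (star x y) z - star x (star y z)
                 = star (star x z) y - star x (star z y)) /\
  (forall x y z, star x (star y z) = star y (star x z)) /\
  (forall x y z, star x (mul y z) = mul (star x y) z) /\
  (forall x y z, star x (mul y z) + star y (mul x z) = star (mul x y) z).

Definition derivation (V : Type) (plus : V -> V -> V) (m : V -> V -> V) (d : V -> V) : Prop :=
  forall x y, d (m x y) = plus (m (d x) y) (m x (d y)).

(* Main.v *)
Require Import Defs.
From HB Require Import structures.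
From mathcomp Require Import all_boot all_order all_algebra.
Local Open Scope ring_scope.
Import GRing.Theory.

Theorem mainTheorem4 (K : fieldType) (V : lmodType K)
    (mul odot : V -> V -> V) (d : V -> V) :
  BiCom_algebra mul odot ->
  linear_map d ->
  derivation +%R mul d ->
  derivation +%R odot d ->
  GDdual_algebra mul (fun x y => odot (d x) y).
Proof.
move=> [[ml mr] [[ol or] [ma [mc [oa [oc comp]]]]]] dl dm dod.
have oadd : forall u v z, odot (u + v) z = odot u z + odot v z.
  by move=> u v z; have := ol 1 u v z; rewrite !scale1r.
have key : forall a b c, odot (mul a b) c = odot a (mul b c).
  move=> a b c; rewrite (oc (mul a b) c) -comp (oc c a) comp.
  by rewrite (mc c b).
split; first by [].
split.
  split=> a x y z /=; last by rewrite or.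
  by rewrite dl ol.
split; first by [].
split; first by [].
split.
  move=> x y z /=; rewrite !dod !oadd !oa addrK addrK.
  by rewrite (oc y z).
split.
  by move=> x y z /=; rewrite -!oa (oc (d x)).
split.
  by move=> x y z /=; rewrite comp.
by move=> x y z /=; rewrite dm oadd (mc x (d y)) !key.
Qed.
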